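(* Let $(X,Y,\phi)$ be an $L$-context and $Y'\subseteq Y$. The following are equivalent: (i) $Y\setminus Y'$ is $\phi$-reducible in RST, i.e. for every $\lambda\in L^Y$ there is $\lambda'\in L^{Y'}$ with $\phi^\forall\lambda=(\phi_{X,Y'})^\forall\lambda'$; (ii) $\phi^\forall\lambda=(\phi_{X,Y'})^\forall\big((\phi^\exists\phi^\forall\lambda)_{Y'}\big)$ for all $\lambda\in L^Y$; (iii) $\phi^\forall\phi^\exists=(\phi_{X,Y'})^\forall(\phi_{X,Y'})^\exists$ as maps $L^X\to L^X$; (iv) $\mathcal{K}\phi=\mathcal{K}\phi_{X,Y'}$ and the map $\mathcal{K}\phi\to\mathcal{K}\phi_{X,Y'}$, $\mu\mapsto(\phi_{X,Y'})^\forall(\phi_{X,Y'})^\exists\mu$, is the identity.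
   Context: $L=(L,* )$ is a complete residuated lattice: a complete lattice with bottom $0$ and top $1$, equipped with a commutative associative operation $*$ with unit $1$ satisfying $a*\bigvee_i b_i=\bigvee_i a*b_i$; $\to$ is its residuum ($a*b\le c\iff a\le b\to c$). An $L$-context is a triple $(X,Y,\phi)$ with $X,Y$ sets and $\phi\colon X\times Y\to L$. $L^X$ is the set of maps $X\to L$. $(\phi^\exists\mu)(y)=\bigvee_{x\in X}\mu(x)*\phi(x,y)$ for $\mu\in L^X$, $(\phi^\forall\lambda)(x)=\bigwedge_{y\in Y}(\phi(x,y)\to\lambda(y))$ for $\lambda\in L^Y$. $\mathcal{K}\phi=\{\mu\in L^X\mid\phi^\forall\phi^\exists\mu=\mu\}$. $\phi_{X,Y'}$ is the restriction of $\phi$ to $X\times Y'$; $\lambda_{Y'}$ the restriction of $\lambda\in L^Y$ to $Y'$. *)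

(* Defs.v *)
Set Implicit Arguments.

Record CRL := {
  car :> Type;
  le : car -> car -> Prop;
  sup : (car -> Prop) -> car;
  inf : (car -> Prop) -> car;
  mul : car -> car -> car;
  res : car -> car -> car;
  one : car;
  le_refl : forall a, le a a;
  le_trans : forall a b c, le a b -> le b c -> le a c;
  le_antisym : forall a b, le a b -> le b a -> a = b;
  sup_ub : forall (S : car -> Prop) a, S a -> le a (sup S);
  sup_least : forall (S : car -> Prop) b, (forall a, S a -> le a b) -> le (sup S) b;
  inf_lb : forall (S : car -> Prop) a, S a -> le (inf S) a;
  inf_greatest : forall (S : car -> Prop) b, (forall a, S a -> le b a) -> le b (inf S);
  mulC : forall a b, mul a b = mul b a;
  mulA : forall a b c, mul a (mul b c) = mul (mul a b) c;
  mul1 : forall a, mul a one = a;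
  one_top : forall a, le a one;
  mul_sup : forall a (I : Type) (b : I -> car),
      mul a (sup (fun c => exists i, c = b i)) = sup (fun c => exists i, c = mul a (b i));
  adjunction : forall a b c, le (mul a b) c <-> le a (res b c)
}.

Section Ops.
Context {L : CRL}.

Definition Sup (I : Type) (f : I -> L) : L := sup L (fun c => exists i, c = f i).
Definition Inf (I : Type) (f : I -> L) : L := inf L (fun c => exists i, c = f i).

Definition phiE (X Y : Type) (phi : X -> Y -> L) (mu : X -> L) : Y -> L :=
  fun y => Sup (fun x : X => mul L (mu x) (phi x y)).
Definition phiA (X Y : Type) (phi : X -> Y -> L) (lam : Y -> L) : X -> L :=
  fun x => Inf (fun y : Y => res L (phi x y) (lam y)).

Definition Kphi (X Y : Type) (phi : X -> Y -> L) (mu : X -> L) : Prop :=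
  phiA phi (phiE phi mu) = mu.

Definition restrC (X Y : Type) (Y' : Y -> Prop) (phi : X -> Y -> L)
  : X -> {y : Y | Y' y} -> L := fun x y => phi x (proj1_sig y).
Definition restrF (Y : Type) (Y' : Y -> Prop) (lam : Y -> L)
  : {y : Y | Y' y} -> L := fun y => lam (proj1_sig y).
End Ops.

(* Main.v *)
Require Import Defs.
From Stdlib Require Import FunctionalExtensionality.

Section Lem.
Context {L : CRL}.

Definition fle {T : Type} (f g : T -> L) := forall t, le L (f t) (g t).

Lemma fle_antisym {T} (f g : T -> L) : fle f g -> fle g f -> f = g.
Proof. intros H1 H2; apply functional_extensionality; intro t; apply le_antisym; auto. Qed.

Lemma fle_refl {T} (f : T -> L) : fle f f.
Proof. intro; apply le_refl. Qed.

Lemma fle_trans {T} (f g h : T -> L) : fle f g -> fle g h -> fle f h.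
Proof. intros H1 H2 t; eapply le_trans; eauto. Qed.

Lemma Sup_le (I : Type) (f : I -> L) b : le L (Sup f) b <-> forall i, le L (f i) b.
Proof.
  split.
  - intros H0 i. eapply le_trans; [|exact H0]. apply sup_ub. eauto.
  - intros H. apply sup_least. intros a [i ->]. auto.
Qed.

Lemma le_Inf (I : Type) (f : I -> L) b : le L b (Inf f) <-> forall i, le L b (f i).
Proof.
  split.
  - intros H0 i. eapply le_trans; [exact H0|]. apply inf_lb. eauto.
  - intros H. apply inf_greatest. intros a [i ->]. auto.
Qed.

Lemma galois (X Y : Type) (phi : X -> Y -> L) mu lam :
  fle (phiE phi mu) lam <-> fle mu (phiA phi lam).
Proof.
  unfold fle, phiE, phiA; split.
  - intros H x. apply le_Inf. intro y. apply adjunction.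
    specialize (H y). apply (proj1 (Sup_le _ _ _) H).
  - intros H y. apply Sup_le. intro x. apply adjunction.
    specialize (H x). apply (proj1 (le_Inf _ _ _) H).
Qed.

Lemma unit_ (X Y : Type) (phi : X -> Y -> L) mu : fle mu (phiA phi (phiE phi mu)).
Proof. apply galois, fle_refl. Qed.

Lemma counit (X Y : Type) (phi : X -> Y -> L) lam : fle (phiE phi (phiA phi lam)) lam.
Proof. apply galois, fle_refl. Qed.

Lemma A_mono (X Y : Type) (phi : X -> Y -> L) l1 l2 :
  fle l1 l2 -> fle (phiA phi l1) (phiA phi l2).
Proof. intro H. apply galois. eapply fle_trans; [apply counit|exact H]. Qed.

Lemma E_mono (X Y : Type) (phi : X -> Y -> L) m1 m2 :
  fle m1 m2 -> fle (phiE phi m1) (phiE phi m2).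
Proof. intro H. apply galois. eapply fle_trans; [exact H|apply unit_]. Qed.

Lemma AEA (X Y : Type) (phi : X -> Y -> L) lam :
  phiA phi (phiE phi (phiA phi lam)) = phiA phi lam.
Proof. apply fle_antisym. apply A_mono, counit. apply unit_. Qed.

Lemma EAE (X Y : Type) (phi : X -> Y -> L) mu :
  phiE phi (phiA phi (phiE phi mu)) = phiE phi mu.
Proof. apply fle_antisym. apply counit. apply E_mono, unit_. Qed.

Lemma A_restr (X Y : Type) (phi : X -> Y -> L) (Y' : Y -> Prop) lam :
  fle (phiA phi lam) (phiA (restrC Y' phi) (restrF Y' lam)).
Proof.
  intro x. unfold phiA. apply le_Inf. intros [y Hy].
  apply inf_lb. exists y. reflexivity.
Qed.

End Lem.

Theorem mainTheorem5 (L : CRL) (X Y : Type) (phi : X -> Y -> L) (Y' : Y -> Prop) :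
  let phi' := restrC Y' phi in
  (* (i) <-> (ii) *)
  ((forall lam : Y -> L, exists lam' : {y : Y | Y' y} -> L,
        phiA phi lam = phiA phi' lam')
   <->
   (forall lam : Y -> L,
        phiA phi lam = phiA phi' (restrF Y' (phiE phi (phiA phi lam)))))
  /\
  (* (ii) <-> (iii) *)
  ((forall lam : Y -> L,
        phiA phi lam = phiA phi' (restrF Y' (phiE phi (phiA phi lam))))
   <->
   (forall mu : X -> L, phiA phi (phiE phi mu) = phiA phi' (phiE phi' mu)))
  /\
  (* (iii) <-> (iv) *)
  ((forall mu : X -> L, phiA phi (phiE phi mu) = phiA phi' (phiE phi' mu))
   <->
   ((forall mu : X -> L, Kphi phi mu <-> Kphi phi' mu)
    /\ (forall mu : X -> L, Kphi phi mu -> phiA phi' (phiE phi' mu) = mu))).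
Proof.
  intro phi'.
  assert (HE : forall mu, phiE phi' mu = restrF Y' (phiE phi mu)) by reflexivity.
  split; [|split].
  - split.
    + intros H lam. destruct (H lam) as [lam' Hl].
      rewrite <- HE. rewrite Hl.
      symmetry. apply AEA.
    + intros H lam. eexists. apply H.
  - split.
    + intros H mu. rewrite H, EAE. reflexivity.
    + intros H lam. rewrite <- HE, <- H. symmetry. apply AEA.
  - split.
    + intros H. split.
      * intro mu. unfold Kphi. rewrite H. tauto.
      * intros mu K. rewrite <- H. exact K.
    + intros [H1 H2] mu.
      set (nu := phiA phi (phiE phi mu)).
      assert (Knu : Kphi phi nu) by (unfold Kphi, nu; rewrite EAE; reflexivity).
      apply fle_antisym.
      * rewrite HE. apply A_restr.
      * rewrite <- (H2 nu Knu). apply A_mono, E_mono, unit_.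
Qed.
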